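(* Let $0\le s<t\le T$ and let $\gamma_{(s,t)}$ be the three-part path in $\{\mathrm{Im}\,z\ge0\}$ $$\gamma_{(s,t)}=[s,s+i(t-s)]\cup[s+i(t-s),t+i(t-s)]\cup[t+i(t-s),t],$$ and $\overline{\gamma_{(s,t)}}$ its complex conjugate. Then for any $\varepsilon>0$ and $\alpha\in(0,1)$, $$\int_{\gamma_{(s,t)}}|dz|\int_{\overline{\gamma_{(s,t)}}}|dw|\,|-i(z-w)+\varepsilon|^{\alpha-2}\le c\,|t-s|^\alpha,$$ where $c$ does not depend on $s,t,\varepsilon$. Moreover, for any $\eta>0$ and $\lambda\in(0,\alpha)$, $$\int_{\gamma_{(s,t)}}|dz|\int_{\overline{\gamma_{(s,t)}}}|dw|\,\big|(-i(z-w)+\varepsilon)^{\alpha-2}-(-i(z-w)+\eta)^{\alpha-2}\big|\le c\,|t-s|^{\alpha-\lambda}|\varepsilon-\eta|^\lambda,$$ where $c$ does not depend on $s,t,\varepsilon,\eta$.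
   Context: $|dz|$ denotes integration with respect to arc length along the path. Complex powers are taken with the principal branch (for $z\in\gamma_{(s,t)}$, $w\in\overline{\gamma_{(s,t)}}$ and $\varepsilon>0$, $-i(z-w)+\varepsilon$ has positive real part). *)

(* Defs.v *)
From Stdlib Require Import Reals.
From Coquelicot Require Import Coquelicot.
Open Scope R_scope.

(* Real power with the convention 0^a = 0 (used only for exponents a > 0). *)
Definition rpow (x a : R) : R :=
  if Rle_dec x 0 then 0 else Rpower x a.

(* Principal argument in (-PI, PI]. *)
Definition Arg (u : C) : R :=
  let x := fst u in let y := snd u in
  if Rlt_dec 0 x then atan (y / x)
  else if Rlt_dec x 0 then
    (if Rle_dec 0 y then atan (y / x) + PI else atan (y / x) - PI)
  else if Rlt_dec 0 y then PI / 2
  else if Rlt_dec y 0 then - (PI / 2) else 0.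

(* Principal complex power u^p = exp(p Log u), Log u = ln|u| + i Arg u; 0^p := 0. *)
Definition cpow (u : C) (p : R) : C :=
  if Req_EM_T (Cmod u) 0 then RtoC 0
  else (Rpower (Cmod u) p * cos (p * Arg u), Rpower (Cmod u) p * sin (p * Arg u)).

(* Arc-length (unit speed) parametrization of the three-part path
   gamma_(s,t) = [s, s+i(t-s)] ∪ [s+i(t-s), t+i(t-s)] ∪ [t+i(t-s), t],
   with parameter u ∈ [0, 3(t-s)]. *)
Definition gam (s t u : R) : C :=
  let L := t - s in
  if Rle_dec u L then (s, u)
  else if Rle_dec u (2 * L) then (s + (u - L), L)
  else (t, 3 * L - u).

Definition path_dint (s t : R) (F : C -> C -> R) : R :=
  RInt (fun u => RInt (fun v => F (gam s t u) (Cconj (gam s t v))) 0 (3 * (t - s)))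
       0 (3 * (t - s)).

Definition kern_base (z w : C) (eps : R) : C :=
  Cplus (Cmult (Copp Ci) (Cminus z w)) (RtoC eps).

(* Main.v *)
Require Import Defs.
From Stdlib Require Import Reals Lra Classical.
From Coquelicot Require Import Coquelicot.
Open Scope R_scope.

Lemma RInt_nonex (f : R -> R) a b : ~ ex_RInt f a b -> RInt f a b = 0.
Proof.
intros H. unfold RInt, iota, lim. simpl. unfold R_complete_lim.
rewrite (Lub_Rbar_eqset _ (fun _ => True)).
- rewrite (is_lub_Rbar_unique _ p_infty). reflexivity.
  split. intros x _; simpl; auto.
  intros [l| |] Hl; simpl; auto.
  specialize (Hl (l+1) I). simpl in Hl. lra.
  specialize (Hl 0 I). simpl in Hl. auto.
- intros x; split; auto. intros _ y Hy. exfalso. apply H. exists y. exact Hy.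
Qed.

Lemma RInt_le_maj (f g : R -> R) a b :
  a <= b -> ex_RInt g a b -> (forall x, a <= x <= b -> f x <= g x) ->
  0 <= RInt g a b -> RInt f a b <= RInt g a b.
Proof.
intros Hab Hg Hfg H0.
destruct (classic (ex_RInt f a b)) as [Hf|Hf].
- apply RInt_le; auto. intros; apply Hfg; lra.
- rewrite RInt_nonex; auto.
Qed.

Lemma Rpower_pos x y : 0 < Rpower x y.
Proof. unfold Rpower; apply exp_pos. Qed.

Lemma Rpower_decr x y r : r < 0 -> 0 < x <= y -> Rpower y r <= Rpower x r.
Proof.
intros Hr Hxy.
assert (E : forall z, Rpower z r = / Rpower z (-r)).
{ intros z. rewrite <- Rpower_Ropp. f_equal. ring. }
rewrite !E.
apply Rinv_le_contravar. apply Rpower_pos.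
apply Rle_Rpower_l; lra.
Qed.

Lemma is_derive_Rpower_aff a s r x : 0 < a + s * x ->
  is_derive (fun x => Rpower (a + s * x) r) x (r * Rpower (a + s * x) (r - 1) * s).
Proof.
intros H.
pose proof (is_derive_comp (fun y => Rpower y r) (fun x => a + s * x) x
   (r * Rpower (a + s * x) (r - 1)) s) as HH.
simpl in HH. unfold scal in HH; simpl in HH; unfold mult in HH; simpl in HH.
rewrite Rmult_comm. apply HH.
- apply is_derive_Reals. apply derivable_pt_lim_power. exact H.
- auto_derive; auto; ring.
Qed.

Lemma cont_Rpower_aff a s r x : 0 < a + s * x ->
  continuous (fun x => Rpower (a + s * x) r) x.
Proof.
intros H. apply (ex_derive_continuous (V := R_NormedModule) (fun x => Rpower (a + s * x) r)). eexists. apply is_derive_Rpower_aff; auto.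
Qed.

Lemma int1 B M q : 0 < B -> 0 <= M -> q <> -1 ->
  is_RInt (fun v => Rpower (B + 1 * v) q) 0 M
    ((Rpower (B + M) (q+1) - Rpower B (q+1)) / (q+1)).
Proof.
intros HB HM Hq.
assert (Hq1 : q + 1 <> 0) by lra.
match goal with |- is_RInt _ _ _ ?V => replace V with
  (minus ((fun v => Rpower (B + 1 * v) (q+1) / (q+1)) M) ((fun v => Rpower (B + 1 * v) (q+1) / (q+1)) 0)) end.
2:{ unfold minus, plus, opp; simpl. replace (B + 1 * M) with (B + M) by ring.
  replace (B + 1 * 0) with B by ring. field. auto. }
apply (is_RInt_derive (V:=R_CompleteNormedModule) (fun v => Rpower (B + 1 * v) (q+1) / (q+1))).
- intros x Hx. rewrite Rmin_left in Hx by lra. rewrite Rmax_right in Hx by lra.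
  unfold Rdiv. apply (is_derive_ext (fun v => / (q+1) * Rpower (B + 1 * v) (q+1))).
  intros; simpl; apply Rmult_comm.
  replace (Rpower (B + 1 * x) q) with (/ (q+1) * ((q+1) * Rpower (B + 1*x) (q+1-1) * 1)).
  apply is_derive_scal. apply is_derive_Rpower_aff. lra.
  replace (q+1-1) with q by ring. field. auto.
- intros x Hx. rewrite Rmin_left in Hx by lra. rewrite Rmax_right in Hx by lra.
  apply cont_Rpower_aff. lra.
Qed.

Lemma int2 B M q : 0 < B -> 0 <= M -> q <> -1 ->
  is_RInt (fun v => Rpower ((B + M) + (-1) * v) q) 0 M
    ((Rpower (B + M) (q+1) - Rpower B (q+1)) / (q+1)).
Proof.
intros HB HM Hq.
assert (Hq1 : q + 1 <> 0) by lra.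
match goal with |- is_RInt _ _ _ ?V => replace V with
  (minus ((fun v => - (Rpower ((B + M) + (-1) * v) (q+1) / (q+1))) M) ((fun v => - (Rpower ((B + M) + (-1) * v) (q+1) / (q+1))) 0)) end.
2:{ unfold minus, plus, opp; simpl. replace (B + M + -1 * M) with B by ring.
  replace (B + M + -1 * 0) with (B+M) by ring. field. auto. }
apply (is_RInt_derive (V:=R_CompleteNormedModule) (fun v => - (Rpower ((B + M) + (-1) * v) (q+1) / (q+1)))).
- intros x Hx. rewrite Rmin_left in Hx by lra. rewrite Rmax_right in Hx by lra.
  unfold Rdiv. apply (is_derive_ext (fun v => - / (q+1) * Rpower ((B + M) + (-1) * v) (q+1))).
  intros; simpl; rewrite <- Ropp_mult_distr_l, Rmult_comm; reflexivity.
  replace (Rpower ((B + M) + (-1) * x) q) with (- / (q+1) * ((q+1) * Rpower ((B + M) + (-1)*x) (q+1-1) * (-1))).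
  apply is_derive_scal. apply is_derive_Rpower_aff. lra.
  replace (q+1-1) with q by ring. field. auto.
- intros x Hx. rewrite Rmin_left in Hx by lra. rewrite Rmax_right in Hx by lra.
  apply cont_Rpower_aff. lra.
Qed.

Lemma subadd a b r : 0 < a -> 0 < b -> 0 < r < 1 ->
  Rpower (a + b) r <= Rpower a r + Rpower b r.
Proof.
intros Ha Hb Hr.
assert (E : forall z, 0 < z -> Rpower z r = z * Rpower z (r - 1)).
{ intros z Hz. rewrite <- (Rpower_1 z) at 2 by auto. rewrite <- Rpower_plus. f_equal; ring. }
rewrite (E (a+b)) by lra. rewrite (E a), (E b) by lra.
rewrite Rmult_plus_distr_r.
apply Rplus_le_compat; apply Rmult_le_compat_l; try lra; apply Rpower_decr; lra.
Qed.

Lemma Rmin_cases u M : Rmin u M = u \/ Rmin u M = M.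
Proof. unfold Rmin; destruct Rle_dec; auto. Qed.

Lemma Rpower_scal_le c x y q : 0 < c -> q < 0 -> 0 < x -> c * x <= y ->
  Rpower y q <= Rpower c q * Rpower x q.
Proof.
intros Hc Hq Hx H. rewrite Rpower_mult_distr by auto. apply Rpower_decr; auto.
split; auto. apply Rmult_lt_0_compat; auto.
Qed.

Lemma main_bound q mu L K (G : R -> R -> R) (y : R -> R) :
  -2 < q < -1 -> 0 < mu -> 0 < L -> 0 <= K ->
  (forall u, 0 <= u <= 3 * L -> 2/3 * Rmin u (3 * L - u) <= y u) ->
  (forall u v, 0 <= u <= 3 * L -> 0 <= v <= 3 * L -> G u v <= K * Rpower (y u + y v + mu) q) ->
  RInt (fun u => RInt (fun v => G u v) 0 (3 * L)) 0 (3 * L)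
  <= K * (Rpower (2/3) q * 4 * Rpower 3 (q+2) / ((-(q+1)) * (q+2))) * Rpower L (q+2).
Proof.
intros Hq Hmu HL HK Hy HG.
set (c0 := K * Rpower (2/3) q).
assert (Hc0 : 0 <= c0) by (unfold c0; apply Rmult_le_pos; auto; left; apply Rpower_pos).
set (m := fun u => Rmin u (3 * L - u)).
assert (Hm : forall u, 0 <= u <= 3 * L -> 0 <= m u /\ (m u = u \/ m u = 3 * L - u)).
{ intros u Hu. unfold m. split. apply Rmin_glb; lra. apply Rmin_cases. }
set (hin := fun u v => c0 * (Rpower ((m u + mu) + 1 * v) q + Rpower ((m u + mu + 3 * L) + (-1) * v) q)).
assert (Hpt : forall u v, 0 <= u <= 3 * L -> 0 <= v <= 3 * L -> G u v <= hin u v).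
{ intros u v Hu Hv. eapply Rle_trans. apply HG; auto.
  unfold hin, c0. rewrite Rmult_assoc. apply Rmult_le_compat_l; auto.
  destruct (Hm u Hu) as [Hmu0 _]. destruct (Hm v Hv) as [Hmv0 Hmv].
  pose proof (Hy u Hu) as Hyu. pose proof (Hy v Hv) as Hyv. change (2/3 * m u <= y u) in Hyu. change (2/3 * m v <= y v) in Hyv.
  eapply Rle_trans. apply (Rpower_scal_le (2/3) (m u + mu + m v)); try lra.
  apply Rmult_le_compat_l; [left; apply Rpower_pos|].
  pose proof (Rpower_pos (m u + mu + 1 * v) q). pose proof (Rpower_pos (m u + mu + 3 * L + -1 * v) q).
  destruct Hmv as [E|E]; rewrite E.
  - replace (m u + mu + v) with (m u + mu + 1 * v) by ring. lra.
  - replace (m u + mu + (3 * L - v)) with (m u + mu + 3 * L + -1 * v) by ring. lra. }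
set (hout := fun u => (c0 * 2 / (-(q+1))) * (Rpower (mu + 1 * u) (q+1) + Rpower ((mu + 3 * L) + (-1) * u) (q+1))).
assert (Hinn : forall u, 0 <= u <= 3 * L -> RInt (fun v => G u v) 0 (3 * L) <= hout u).
{ intros u Hu. destruct (Hm u Hu) as [Hmu0 Hmu'].
  assert (HI : is_RInt (hin u) 0 (3 * L)
     (c0 * (2 * ((Rpower ((m u + mu) + 3 * L) (q+1) - Rpower (m u + mu) (q+1)) / (q+1))))).
  { pose proof (int1 (m u + mu) (3 * L) q ltac:(lra) ltac:(lra) ltac:(lra)) as I1.
    pose proof (int2 (m u + mu) (3 * L) q ltac:(lra) ltac:(lra) ltac:(lra)) as I2.
    pose proof (is_RInt_scal _ _ _ c0 _ (is_RInt_plus _ _ _ _ _ _ I1 I2)) as I3.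
    match goal with |- is_RInt _ _ _ ?V => replace V with
        (scal c0 (plus ((Rpower (m u + mu + 3 * L) (q + 1) - Rpower (m u + mu) (q + 1)) / (q + 1))
                       ((Rpower (m u + mu + 3 * L) (q + 1) - Rpower (m u + mu) (q + 1)) / (q + 1)))) end.
    2:{ unfold scal, plus; simpl; unfold mult; simpl. ring. }
    eapply is_RInt_ext; [|exact I3]. intros x _. reflexivity. }
  assert (HP1 : 0 < Rpower (m u + mu + 3 * L) (q + 1)) by apply Rpower_pos.
  assert (HP01 : Rpower (m u + mu + 3 * L) (q + 1) <= Rpower (m u + mu) (q + 1))
    by (apply Rpower_decr; lra).
  assert (HnQ : 0 < - (q + 1)) by lra.
  assert (Hval : c0 * (2 * ((Rpower (m u + mu + 3 * L) (q + 1) - Rpower (m u + mu) (q + 1)) / (q + 1)))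
     = (c0 * 2 / (- (q+1))) * (Rpower (m u + mu) (q + 1) - Rpower (m u + mu + 3 * L) (q + 1)))
    by (field; lra).
  assert (Hcc : 0 <= c0 * 2 / (- (q+1))).
  { unfold Rdiv. apply Rmult_le_pos; [lra|]. left; apply Rinv_0_lt_compat; lra. }
  apply Rle_trans with (RInt (hin u) 0 (3 * L)).
  - apply RInt_le_maj. lra. eexists; exact HI. intros x Hx; apply Hpt; auto.
    rewrite (is_RInt_unique _ _ _ _ HI). rewrite Hval. apply Rmult_le_pos; lra.
  - rewrite (is_RInt_unique _ _ _ _ HI). rewrite Hval. unfold hout.
    apply Rmult_le_compat_l; auto.
    pose proof (Rpower_pos (mu + 1 * u) (q + 1)). pose proof (Rpower_pos (mu + 3 * L + -1 * u) (q + 1)).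
    destruct Hmu' as [E|E]; rewrite E in *.
    + replace (u + mu) with (mu + 1 * u) by ring. match goal with |- _ - Rpower ?x ?r <= _ => pose proof (Rpower_pos x r) end; lra.
    + replace (3 * L - u + mu) with (mu + 3 * L + -1 * u) by ring. match goal with |- _ - Rpower ?x ?r <= _ => pose proof (Rpower_pos x r) end; lra. }
assert (HO : is_RInt hout 0 (3 * L)
   ((c0 * 2 / (- (q+1))) * (2 * ((Rpower (mu + 3 * L) (q+1+1) - Rpower mu (q+1+1)) / (q+1+1))))).
{ pose proof (int1 mu (3 * L) (q+1) ltac:(lra) ltac:(lra) ltac:(lra)) as I1.
  pose proof (int2 mu (3 * L) (q+1) ltac:(lra) ltac:(lra) ltac:(lra)) as I2.
  pose proof (is_RInt_scal _ _ _ (c0 * 2 / (- (q+1))) _ (is_RInt_plus _ _ _ _ _ _ I1 I2)) as I3.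
  match goal with |- is_RInt _ _ _ ?V => replace V with
        (scal (c0 * 2 / (- (q+1))) (plus ((Rpower (mu + 3 * L) (q + 1 + 1) - Rpower mu (q + 1 + 1)) / (q + 1 + 1))
                       ((Rpower (mu + 3 * L) (q + 1 + 1) - Rpower mu (q + 1 + 1)) / (q + 1 + 1)))) end.
  2:{ unfold scal, plus; simpl; unfold mult; simpl. ring. }
  eapply is_RInt_ext; [|exact I3]. intros x _. reflexivity. }
assert (HnQ : 0 < - (q + 1)) by lra.
assert (Hcc : 0 <= c0 * 2 / (- (q+1))).
{ unfold Rdiv. apply Rmult_le_pos; [lra|]. left; apply Rinv_0_lt_compat; lra. }
assert (Hq2 : 0 < q + 1 + 1) by lra.
assert (Hsub : Rpower (mu + 3 * L) (q+1+1) - Rpower mu (q+1+1) <= Rpower (3 * L) (q+1+1)).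
{ pose proof (subadd mu (3 * L) (q+1+1) ltac:(lra) ltac:(lra) ltac:(lra)). lra. }
assert (Hmono : Rpower mu (q+1+1) <= Rpower (mu + 3 * L) (q+1+1)) by (apply Rle_Rpower_l; lra).
apply Rle_trans with (RInt hout 0 (3 * L)).
- apply RInt_le_maj. lra. eexists; exact HO. auto.
  rewrite (is_RInt_unique _ _ _ _ HO). apply Rmult_le_pos; auto.
  apply Rmult_le_pos; [lra|]. unfold Rdiv. apply Rmult_le_pos; [lra|]. left; apply Rinv_0_lt_compat; lra.
- rewrite (is_RInt_unique _ _ _ _ HO).
  rewrite <- Rpower_mult_distr in Hsub by lra.
  replace (q + 1 + 1) with (q + 2) in * by ring.
  unfold c0.
  apply Rle_trans with (c0 * 2 / - (q + 1) * (2 * (Rpower 3 (q + 2) * Rpower L (q + 2) / (q + 2)))).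
  + apply Rmult_le_compat_l; auto. apply Rmult_le_compat_l; [lra|].
    unfold Rdiv. apply Rmult_le_compat_r; auto. left; apply Rinv_0_lt_compat; lra.
  + unfold c0. right. field. lra.
Qed.

Definition Phi (D b p x : R) := exp (p/2 * ln ((D+x)^2+b^2)) * cos (p * atan (b/(D+x))).
Definition Psi (D b p x : R) := exp (p/2 * ln ((D+x)^2+b^2)) * sin (p * atan (b/(D+x))).
Definition dPhi (D b p x : R) :=
  p * exp (p/2 * ln ((D+x)^2+b^2)) / ((D+x)^2+b^2) *
    ((D+x) * cos (p * atan (b/(D+x))) + b * sin (p * atan (b/(D+x)))).
Definition dPsi (D b p x : R) :=
  p * exp (p/2 * ln ((D+x)^2+b^2)) / ((D+x)^2+b^2) *
    ((D+x) * sin (p * atan (b/(D+x))) - b * cos (p * atan (b/(D+x)))).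

Lemma Phi_der D b p x : 0 < D + x -> is_derive (Phi D b p) x (dPhi D b p x).
Proof.
intros H. unfold Phi, dPhi. auto_derive.
- split; [nra|]. split; [lra|auto].
- assert (0 < (D+x)^2 + b^2) by nra.
  replace ((D + x) * ((D + x) * 1) + b * (b * 1)) with ((D+x)^2+b^2) by ring.
  change (b * / (D+x)) with (b / (D+x)).
  set (E := exp _). set (Co := cos _). set (Si := sin _).
  field. split; [lra|]. nra.
Qed.

Lemma Psi_der D b p x : 0 < D + x -> is_derive (Psi D b p) x (dPsi D b p x).
Proof.
intros H. unfold Psi, dPsi. auto_derive.
- split; [nra|]. split; [lra|auto].
- assert (0 < (D+x)^2 + b^2) by nra.
  replace ((D + x) * ((D + x) * 1) + b * (b * 1)) with ((D+x)^2+b^2) by ring.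
  change (b * / (D+x)) with (b / (D+x)).
  set (E := exp _). set (Co := cos _). set (Si := sin _).
  field. split; [lra|]. nra.
Qed.

Lemma Cmod_le_sum (u : R * R) : Cmod u <= Rabs (fst u) + Rabs (snd u).
Proof.
unfold Cmod. rewrite <- (sqrt_square (Rabs (fst u) + Rabs (snd u))).
2:{ pose proof (Rabs_pos (fst u)); pose proof (Rabs_pos (snd u)); lra. }
apply sqrt_le_1_alt. rewrite <- (pow2_abs (fst u)), <- (pow2_abs (snd u)).
pose proof (Rabs_pos (fst u)); pose proof (Rabs_pos (snd u)); nra.
Qed.

Lemma E_eq D b p x : 0 < D + x ->
  exp (p/2 * ln ((D+x)^2+b^2)) = Rpower (sqrt ((D+x)^2+b^2)) p
  /\ D + x <= sqrt ((D+x)^2+b^2) /\ Rabs b <= sqrt ((D+x)^2+b^2).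
Proof.
intros H. assert (HQ : 0 < (D+x)^2+b^2) by nra.
split; [|split].
- unfold Rpower. f_equal.
  assert (ln ((D+x)^2+b^2) = 2 * ln (sqrt ((D+x)^2+b^2))).
  { rewrite <- (sqrt_sqrt ((D+x)^2+b^2)) at 1 by lra.
    rewrite ln_mult by (apply sqrt_lt_R0; lra). ring. }
  rewrite H0. field.
- apply Rle_trans with (sqrt ((D+x)*(D+x))). rewrite sqrt_square; lra. apply sqrt_le_1_alt; nra.
- rewrite <- sqrt_Rsqr_abs. apply sqrt_le_1_alt. unfold Rsqr. nra.
Qed.

Lemma trig_bound a b t : Rabs (a * cos t + b * sin t) <= Rabs a + Rabs b /\
                         Rabs (a * sin t - b * cos t) <= Rabs a + Rabs b.
Proof.
pose proof (COS_bound t). pose proof (SIN_bound t).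
assert (Rabs (cos t) <= 1) by (apply Rabs_le; lra).
assert (Rabs (sin t) <= 1) by (apply Rabs_le; lra).
pose proof (Rabs_pos a). pose proof (Rabs_pos b).
pose proof (Rabs_pos (cos t)). pose proof (Rabs_pos (sin t)).
split.
- eapply Rle_trans; [apply Rabs_triang|]. rewrite !Rabs_mult. nra.
- unfold Rminus. eapply Rle_trans; [apply Rabs_triang|]. rewrite Rabs_Ropp, !Rabs_mult. nra.
Qed.

Lemma dbound_gen p r A : p < 0 -> 0 < r -> Rabs A <= 2 * r ->
  Rabs (p * Rpower r p / (r ^ 2) * A) <= 2 * Rabs p * Rpower r (p - 1).
Proof.
intros Hp Hr HA.
assert (E : Rpower r (p - 1) = Rpower r p / r).
{ unfold Rminus. rewrite Rpower_plus, Rpower_Ropp, Rpower_1 by auto. reflexivity. }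
rewrite E. pose proof (Rpower_pos r p).
rewrite Rabs_mult. unfold Rdiv. rewrite !Rabs_mult.
rewrite (Rabs_pos_eq (Rpower r p)) by lra.
rewrite (Rabs_pos_eq (/ r ^ 2)) by (left; apply Rinv_0_lt_compat; nra).
replace (2 * Rabs p * (Rpower r p * / r)) with (Rabs p * Rpower r p * / r ^ 2 * (2 * r)) by (field; lra).
apply Rmult_le_compat_l; auto.
apply Rmult_le_pos; [apply Rmult_le_pos; [apply Rabs_pos|lra]|]. left; apply Rinv_0_lt_compat; nra.
Qed.

Lemma dPhi_bound D b p x mu : p < 0 -> 0 < mu -> 0 <= D -> mu <= x ->
  Rabs (dPhi D b p x) <= 2 * Rabs p * Rpower (D + mu) (p - 1)
  /\ Rabs (dPsi D b p x) <= 2 * Rabs p * Rpower (D + mu) (p - 1).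
Proof.
intros Hp Hmu HD Hx.
destruct (E_eq D b p x ltac:(lra)) as [E1 [E2 E3]].
set (r := sqrt ((D+x)^2+b^2)) in *.
assert (Hr : 0 < r) by lra.
assert (HQ : (D+x)^2+b^2 = r ^ 2).
{ unfold r. rewrite pow2_sqrt; auto. nra. }
assert (Hmono : Rpower r (p - 1) <= Rpower (D + mu) (p - 1)) by (apply Rpower_decr; lra).
assert (HDx : Rabs (D + x) <= r) by (rewrite Rabs_pos_eq by lra; lra).
destruct (trig_bound (D+x) b (p * atan (b / (D + x)))) as [T1 T2].
split.
- unfold dPhi. rewrite E1, HQ. eapply Rle_trans. apply dbound_gen; auto. lra.
  pose proof (Rabs_pos p). nra.
- unfold dPsi. rewrite E1, HQ. eapply Rle_trans. apply dbound_gen; auto. lra.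
  pose proof (Rabs_pos p). nra.
Qed.


Lemma cpow_eq D b p x : 0 < D + x -> cpow (D+x, b) p = (Phi D b p x, Psi D b p x).
Proof.
intros H. destruct (E_eq D b p x H) as [E1 _].
unfold cpow. destruct (Req_EM_T (Cmod (D + x, b)) 0) as [e|n].
- exfalso. unfold Cmod in e. simpl in e. apply sqrt_eq_0 in e; nra.
- unfold Arg. simpl. destruct (Rlt_dec 0 (D + x)); [|lra].
  unfold Phi, Psi, Cmod. cbn [fst snd]. rewrite E1. reflexivity.
Qed.

Lemma Cmod_PhiPsi D b p x : 0 < D + x -> Cmod (Phi D b p x, Psi D b p x) <= Rpower (D + x) p \/ p >= 0.
Proof.
intros H. destruct (Rlt_or_le p 0) as [Hp|Hp]; [left|right; lra].
destruct (E_eq D b p x H) as [E1 [E2 _]].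
unfold Phi, Psi. rewrite E1. set (E := Rpower _ p).
assert (HE : 0 < E) by apply Rpower_pos.
unfold Cmod; cbn [fst snd].
replace ((E * cos (p * atan (b / (D + x)))) ^ 2 + (E * sin (p * atan (b / (D + x)))) ^ 2) with (E * E).
- rewrite sqrt_square by lra. apply Rpower_decr; lra.
- pose proof (sin2_cos2 (p * atan (b / (D + x)))). unfold Rsqr in H0. nra.
Qed.

Lemma lip_gen (F dF : R -> R) a b Kb : a < b ->
  (forall x, a <= x <= b -> is_derive F x (dF x)) ->
  (forall x, a <= x <= b -> Rabs (dF x) <= Kb) -> Rabs (F b - F a) <= Kb * (b - a).
Proof.
intros Hab Hd Hb.
destruct (MVT_cor2 F dF a b Hab) as [c [Hc Hc']].
{ intros c Hc. apply is_derive_Reals. apply Hd; auto. }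
rewrite Hc, Rabs_mult, (Rabs_pos_eq (b - a)) by lra.
apply Rmult_le_compat_r; [lra|]. apply Hb; lra.
Qed.

Lemma diff_lip D b p e1 e2 : p < 0 -> 0 <= D -> 0 < e1 -> 0 < e2 ->
  Rabs (Phi D b p e1 - Phi D b p e2) <= 2 * Rabs p * Rpower (D + Rmin e1 e2) (p - 1) * Rabs (e1 - e2)
  /\ Rabs (Psi D b p e1 - Psi D b p e2) <= 2 * Rabs p * Rpower (D + Rmin e1 e2) (p - 1) * Rabs (e1 - e2).
Proof.
intros Hp HD H1 H2.
assert (Hgen : forall a c, 0 < a -> a < c ->
  Rabs (Phi D b p c - Phi D b p a) <= 2 * Rabs p * Rpower (D + a) (p - 1) * (c - a)
  /\ Rabs (Psi D b p c - Psi D b p a) <= 2 * Rabs p * Rpower (D + a) (p - 1) * (c - a)).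
{ intros a c Ha Hac. split; [apply (lip_gen _ (dPhi D b p))|apply (lip_gen _ (dPsi D b p))]; auto.
  - intros x Hx. apply Phi_der; lra.
  - intros x Hx. apply (dPhi_bound D b p x a); lra.
  - intros x Hx. apply Psi_der; lra.
  - intros x Hx. apply (dPhi_bound D b p x a); lra. }
destruct (Rtotal_order e1 e2) as [Hl|[He|Hg]].
- rewrite Rmin_left by lra. rewrite (Rabs_minus_sym e1), (Rabs_pos_eq (e2 - e1)) by lra.
  rewrite (Rabs_minus_sym (Phi D b p e1)), (Rabs_minus_sym (Psi D b p e1)). apply Hgen; lra.
- subst. rewrite !Rminus_diag, Rabs_R0. rewrite Rmult_0_r. lra.
- rewrite Rmin_right by lra. rewrite (Rabs_pos_eq (e1 - e2)) by lra. apply Hgen; lra.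
Qed.

Lemma Rmin_cases2 u M : Rmin u M = u \/ Rmin u M = M.
Proof. unfold Rmin; destruct Rle_dec; auto. Qed.

Lemma kern_eq (z w : R * R) e : kern_base z (Cconj w) e = ((snd z + snd w) + e, fst w - fst z).
Proof.
destruct z as [x1 y1], w as [x2 y2]. unfold kern_base, Cconj, Cminus, Cplus, Cmult, Copp, Ci, RtoC.
simpl. f_equal; ring.
Qed.

Lemma diff_pt D b p e1 e2 : p < 0 -> 0 <= D -> 0 < e1 -> 0 < e2 ->
  Cmod (Cminus (cpow (D + e1, b) p) (cpow (D + e2, b) p))
    <= 4 * Rabs p * Rpower (D + Rmin e1 e2) (p - 1) * Rabs (e1 - e2)
  /\ Cmod (Cminus (cpow (D + e1, b) p) (cpow (D + e2, b) p)) <= 2 * Rpower (D + Rmin e1 e2) p.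
Proof.
intros Hp HD H1 H2.
rewrite !cpow_eq by lra.
split.
- eapply Rle_trans; [apply Cmod_le_sum|].
  destruct (diff_lip D b p e1 e2) as [L1 L2]; auto.
  unfold Cminus, Cplus, Copp. cbn [fst snd]. match goal with |- _ <= ?R => replace R with (2 * Rabs p * Rpower (D + Rmin e1 e2) (p - 1) * Rabs (e1 - e2) + 2 * Rabs p * Rpower (D + Rmin e1 e2) (p - 1) * Rabs (e1 - e2)) by ring end. apply Rplus_le_compat; [exact L1|exact L2].
- unfold Cminus. eapply Rle_trans; [apply Cmod_triangle|]. rewrite Cmod_opp.
  destruct (Cmod_PhiPsi D b p e1) as [A1|]; [lra| |lra].
  destruct (Cmod_PhiPsi D b p e2) as [A2|]; [lra| |lra].
  assert (Rpower (D + e1) p <= Rpower (D + Rmin e1 e2) p).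
  { apply Rpower_decr; auto. split. destruct (Rmin_cases2 e1 e2) as [E|E]; rewrite E; lra.
    pose proof (Rmin_l e1 e2); lra. }
  assert (Rpower (D + e2) p <= Rpower (D + Rmin e1 e2) p).
  { apply Rpower_decr; auto. split. destruct (Rmin_cases2 e1 e2) as [E|E]; rewrite E; lra.
    pose proof (Rmin_r e1 e2); lra. }
  lra.
Qed.

Lemma rpow_nonneg x a : 0 <= rpow x a.
Proof. unfold rpow. destruct Rle_dec; [lra|left; apply Rpower_pos]. Qed.

Lemma diff_final D b p lam e1 e2 : p < 0 -> 0 <= D -> 0 < e1 -> 0 < e2 -> 0 < lam < 1 ->
  Cmod (Cminus (cpow (D + e1, b) p) (cpow (D + e2, b) p))
    <= (2 + 4 * Rabs p) * rpow (Rabs (e1 - e2)) lam * Rpower (D + Rmin e1 e2) (p - lam).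
Proof.
intros Hp HD H1 H2 Hl.
destruct (diff_pt D b p e1 e2) as [B1 B2]; auto.
set (d := Rabs (e1 - e2)) in *. set (Y := D + Rmin e1 e2) in *.
assert (HY : 0 < Y) by (unfold Y; destruct (Rmin_cases2 e1 e2) as [E|E]; rewrite E; lra).
pose proof (Rabs_pos p) as Hap.
pose proof (Rpower_pos Y (p - lam)) as HYp.
pose proof (Rpower_pos Y (p - 1)) as HYp1.
destruct (Req_dec d 0) as [Hd|Hd].
- rewrite Hd, Rmult_0_r in B1. pose proof (rpow_nonneg d lam).
  apply Rle_trans with 0; [lra|]. apply Rmult_le_pos; [apply Rmult_le_pos|]; lra.
- assert (Hdp : 0 < d) by (pose proof (Rabs_pos (e1 - e2)); unfold d in *; lra).
  assert (Er : rpow d lam = Rpower d lam).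
  { unfold rpow. destruct Rle_dec; [lra|auto]. }
  rewrite Er. pose proof (Rpower_pos d lam) as Hdl.
  destruct (Rle_or_lt d Y) as [HdY|HdY].
  + eapply Rle_trans; [exact B1|].
    assert (Ed : d = Rpower d lam * Rpower d (1 - lam)).
    { rewrite <- Rpower_plus. replace (lam + (1 - lam)) with 1 by ring. rewrite Rpower_1; auto. }
    assert (EY : Rpower Y (p - lam) = Rpower Y (p - 1) * Rpower Y (1 - lam)).
    { rewrite <- Rpower_plus. f_equal. ring. }
    assert (Hm : Rpower d (1 - lam) <= Rpower Y (1 - lam)) by (apply Rle_Rpower_l; lra).
    rewrite Ed at 1. rewrite EY.
    apply Rle_trans with (4 * Rabs p * Rpower Y (p - 1) * Rpower d lam * Rpower Y (1 - lam)).
    * replace (4 * Rabs p * Rpower Y (p - 1) * (Rpower d lam * Rpower d (1 - lam))) with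
        ((4 * Rabs p * Rpower Y (p - 1) * Rpower d lam) * Rpower d (1 - lam)) by ring.
      apply Rmult_le_compat_l; auto. apply Rmult_le_pos; [|lra]. apply Rmult_le_pos; lra.
    * replace ((2 + 4 * Rabs p) * Rpower d lam * (Rpower Y (p - 1) * Rpower Y (1 - lam))) with
        ((2 + 4 * Rabs p) * (Rpower Y (p - 1) * Rpower d lam * Rpower Y (1 - lam))) by ring.
      replace (4 * Rabs p * Rpower Y (p - 1) * Rpower d lam * Rpower Y (1 - lam)) with
        (4 * Rabs p * (Rpower Y (p - 1) * Rpower d lam * Rpower Y (1 - lam))) by ring.
      apply Rmult_le_compat_r; [|lra].
      pose proof (Rpower_pos Y (1 - lam)). apply Rmult_le_pos; [apply Rmult_le_pos|]; lra.
  + eapply Rle_trans; [exact B2|].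
    assert (EY : Rpower Y p = Rpower Y lam * Rpower Y (p - lam)).
    { rewrite <- Rpower_plus. f_equal. ring. }
    assert (Hm : Rpower Y lam <= Rpower d lam) by (apply Rle_Rpower_l; lra).
    rewrite EY.
    apply Rle_trans with (2 * Rpower d lam * Rpower Y (p - lam)).
    * rewrite (Rmult_assoc 2 (Rpower d lam)). apply Rmult_le_compat_l; [lra|].
      apply Rmult_le_compat_r; lra.
    * apply Rmult_le_compat_r; [lra|]. apply Rmult_le_compat_r; lra.
Qed.

Lemma gam_y s t u : s < t -> 0 <= u <= 3 * (t - s) ->
  2/3 * Rmin u (3 * (t - s) - u) <= snd (gam s t u).
Proof.
intros Hst Hu. pose proof (Rmin_l u (3 * (t - s) - u)). pose proof (Rmin_r u (3 * (t - s) - u)).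
unfold gam. destruct (Rle_dec u (t - s)); [simpl; lra|].
destruct (Rle_dec u (2 * (t - s))); simpl; lra.
Qed.

Lemma rpow_pos_eq x a : 0 < x -> rpow x a = Rpower x a.
Proof. intros H. unfold rpow. destruct Rle_dec; [lra|auto]. Qed.

Theorem lemma6p1 (T alpha : R) (halpha : 0 < alpha < 1) :
  (exists c : R, forall s t eps : R, 0 <= s -> s < t -> t <= T -> 0 < eps ->
     path_dint s t (fun z w => Rpower (Cmod (kern_base z w eps)) (alpha - 2))
       <= c * rpow (Rabs (t - s)) alpha)
  /\
  (forall lam : R, 0 < lam < alpha ->
   exists c : R, forall s t eps eta : R, 0 <= s -> s < t -> t <= T ->
     0 < eps -> 0 < eta ->
     path_dint s t (fun z w =>
         Cmod (Cminus (cpow (kern_base z w eps) (alpha - 2))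
                      (cpow (kern_base z w eta) (alpha - 2))))
       <= c * rpow (Rabs (t - s)) (alpha - lam) * rpow (Rabs (eps - eta)) lam).
Proof.
split.
- set (q := alpha - 2).
  exists (1 * (Rpower (2/3) q * 4 * Rpower 3 (q+2) / ((-(q+1)) * (q+2)))).
  intros s t eps Hs Hst HtT He.
  unfold path_dint.
  rewrite rpow_pos_eq by (rewrite Rabs_pos_eq; lra). rewrite Rabs_pos_eq by lra.
  replace (Rpower (t - s) alpha) with (Rpower (t - s) (q + 2)) by (unfold q; f_equal; ring).
  apply (main_bound q eps (t - s) 1
     (fun u v => Rpower (Cmod (kern_base (gam s t u) (Cconj (gam s t v)) eps)) q)
     (fun u => snd (gam s t u))); try (unfold q; lra).
  + intros u Hu. apply gam_y; auto.
  + intros u v Hu Hv. rewrite Rmult_1_l. rewrite kern_eq.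
    pose proof (gam_y s t u Hst Hu). pose proof (gam_y s t v Hst Hv).
    assert (0 <= Rmin u (3 * (t - s) - u)) by (apply Rmin_glb; lra).
    assert (0 <= Rmin v (3 * (t - s) - v)) by (apply Rmin_glb; lra).
    apply Rpower_decr. unfold q; lra. split. lra.
    match goal with |- _ <= Cmod ?c => pose proof (re_le_Cmod c) as Hre end.
    unfold Re in Hre. cbn [fst] in Hre. pose proof (Rle_abs (snd (gam s t u) + snd (gam s t v) + eps)). lra.
- intros lam Hlam.
  set (p := alpha - 2). set (q := p - lam).
  exists ((2 + 4 * Rabs p) * (Rpower (2/3) q * 4 * Rpower 3 (q+2) / ((-(q+1)) * (q+2)))).
  intros s t eps eta Hs Hst HtT He Hn.
  unfold path_dint.
  rewrite (rpow_pos_eq (Rabs (t - s))) by (rewrite Rabs_pos_eq; lra). rewrite (Rabs_pos_eq (t - s)) by lra.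
  replace (alpha - lam) with (q + 2) by (unfold q, p; ring).
  eapply Rle_trans.
  apply (main_bound q (Rmin eps eta) (t - s) ((2 + 4 * Rabs p) * rpow (Rabs (eps - eta)) lam)
     (fun u v => Cmod (Cminus (cpow (kern_base (gam s t u) (Cconj (gam s t v)) eps) p)
                      (cpow (kern_base (gam s t u) (Cconj (gam s t v)) eta) p)))
     (fun u => snd (gam s t u))); try (unfold q, p; lra).
  + unfold Rmin; destruct Rle_dec; lra.
  + apply Rmult_le_pos. pose proof (Rabs_pos p); lra. apply rpow_nonneg.
  + intros u Hu. apply gam_y; auto.
  + intros u v Hu Hv. rewrite !kern_eq.
    pose proof (gam_y s t u Hst Hu). pose proof (gam_y s t v Hst Hv).
    assert (0 <= Rmin u (3 * (t - s) - u)) by (apply Rmin_glb; lra).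
    assert (0 <= Rmin v (3 * (t - s) - v)) by (apply Rmin_glb; lra).
    unfold q. apply diff_final; unfold p; lra.
  + right. ring.
Qed.
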